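(* Let $X\colon\mathcal K\leftarrow\mathcal H$ and $Y\colon\mathcal H\leftarrow\mathcal G$ be groupoid correspondences, and let $U\subseteq X$ and $V\subseteq Y$ be slices. Then $U\cdot V=\{[x,y]:x\in U,y\in V,s(x)=r(y)\}\subseteq X\circ_{\mathcal H}Y$ is a slice of $X\circ_{\mathcal H}Y$, and for each $z\in U\cdot V$ the elements $x\in U$, $y\in V$ with $z=[x,y]$ are unique.
   Context: Groupoids are étale ($r,s$ local homeomorphisms, continuous multiplication and inversion) with Hausdorff locally compact object space. A groupoid correspondence $X\colon\mathcal H\leftarrow\mathcal G$: space with commuting continuous left $\mathcal H$-action (anchor $r$) and right $\mathcal G$-action (anchor $s$), $s$ a local homeomorphism, right action free and proper. $X\circ_{\mathcal H}Y$ is the orbit space of $X\times_{s,\mathcal H^0,r}Y$ under $h\cdot(x,y)=(xh^{-1},hy)$, elements $[x,y]$, a groupoid correspondence $\mathcal K\leftarrow\mathcal G$ with $k[x,y]=[kx,y]$, $[x,y]g=[x,yg]$, $s[x,y]=s(y)$. A slice of a correspondence $X\colon\mathcal H\leftarrow\mathcal G$ is an open subset on which both $s\colon X\to\mathcal G^0$ and the orbit projection $X\to X/\mathcal G$ are injective. *)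

(* Defs.v *)
From HB Require Import structures.
From mathcomp Require Import all_boot all_algebra all_classical topology.

Set Implicit Arguments.
Unset Strict Implicit.
Unset Printing Implicit Defensive.

Local Open Scope classical_set_scope.

Definition local_homeo (S T : topologicalType) (f : S -> T) : Prop :=
  continuous f /\
  forall x : S, exists U : set S,
    [/\ open U, U x,
        (forall a b, U a -> U b -> f a = f b -> a = b) &
        (forall W : set S, open W -> W `<=` U -> open (f @` W))].

(* Proper map in the sense of Bourbaki (no Hausdorffness assumed):
   continuous, closed, with quasi-compact fibres. *)
Definition proper_map (S T : topologicalType) (f : S -> T) : Prop :=
  [/\ continuous f,
      (forall C : set S, closed C -> closed (f @` C)) &
      (forall t : T, compact (f @^-1` [set t]))].

Record groupoid := Groupoid {
  gmor : topologicalType;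
  gob  : topologicalType;
  grg  : gmor -> gob;
  gsg  : gmor -> gob;
  gmul : gmor -> gmor -> gmor;         (* g*h, meaningful when s g = r h *)
  ginv : gmor -> gmor;
  gunit : gob -> gmor;
  grg_mul : forall g h, gsg g = grg h -> grg (gmul g h) = grg g;
  gsg_mul : forall g h, gsg g = grg h -> gsg (gmul g h) = gsg h;
  gmulA : forall g h k, gsg g = grg h -> gsg h = grg k ->
            gmul (gmul g h) k = gmul g (gmul h k);
  grg_unit : forall x, grg (gunit x) = x;
  gsg_unit : forall x, gsg (gunit x) = x;
  gmul1g : forall g, gmul (gunit (grg g)) g = g;
  gmulg1 : forall g, gmul g (gunit (gsg g)) = g;
  grg_inv : forall g, grg (ginv g) = gsg g;
  gsg_inv : forall g, gsg (ginv g) = grg g;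
  gmulgV : forall g, gmul g (ginv g) = gunit (grg g);
  gmulVg : forall g, gmul (ginv g) g = gunit (gsg g);
  gmul_cont : {within [set p : gmor * gmor | gsg p.1 = grg p.2],
                 continuous (fun p => gmul p.1 p.2)};
  ginv_cont : continuous ginv;
  gunit_cont : continuous gunit;
  grg_etale : local_homeo grg;
  gsg_etale : local_homeo gsg;
  gob_hausdorff : hausdorff_space gob;
  gob_lcompact : locally_compact [set: gob]
}.

Record corr (H G : groupoid) := Corr {
  csp : topologicalType;
  cr : csp -> gob H;
  cs : csp -> gob G;
  lact : gmor H -> csp -> csp;             (* h.x, when s h = r x *)
  ract : csp -> gmor G -> csp;             (* x.g, when s x = r g *)
  cr_lact : forall h x, gsg h = cr x -> cr (lact h x) = grg h;
  cs_lact : forall h x, gsg h = cr x -> cs (lact h x) = cs x;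
  cr_ract : forall x g, cs x = grg g -> cr (ract x g) = cr x;
  cs_ract : forall x g, cs x = grg g -> cs (ract x g) = gsg g;
  lact1 : forall x, lact (gunit (cr x)) x = x;
  ract1 : forall x, ract x (gunit (cs x)) = x;
  lactA : forall h1 h2 x, gsg h1 = grg h2 -> gsg h2 = cr x ->
            lact (gmul h1 h2) x = lact h1 (lact h2 x);
  ractA : forall x g1 g2, cs x = grg g1 -> gsg g1 = grg g2 ->
            ract x (gmul g1 g2) = ract (ract x g1) g2;
  lract_comm : forall h x g, gsg h = cr x -> cs x = grg g ->
            ract (lact h x) g = lact h (ract x g);
  cr_cont : continuous cr;
  lact_cont : {within [set p : gmor H * csp | gsg p.1 = cr p.2],
                 continuous (fun p => lact p.1 p.2)};
  ract_cont : {within [set p : csp * gmor G | cs p.1 = grg p.2],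
                 continuous (fun p => ract p.1 p.2)};
  cs_etale : local_homeo cs;
  ract_free : forall x g, cs x = grg g -> ract x g = x -> g = gunit (cs x);
  ract_proper :
    proper_map (fun p : set_type [set p : csp * gmor G | cs p.1 = grg p.2] =>
                  ((val p).1, ract (val p).1 (val p).2))
}.

Arguments cr {H G} _ _.
Arguments cs {H G} _ _.
Arguments lact {H G} _ _ _.
Arguments ract {H G} _ _ _.

(* A slice: open subset W on which s is injective and on which the orbit
   projection onto the space of right orbits is injective. Stated for any
   space with an anchor s and a right G-action act. *)
Definition is_slice (G : groupoid) (T : topologicalType) (s : T -> gob G)
    (act : T -> gmor G -> T) (W : set T) : Prop :=
  [/\ open W,
      (forall w w', W w -> W w' -> s w = s w' -> w = w') &
      (forall w w', W w -> W w' ->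
         (exists g, s w = grg g /\ w' = act w g) -> w = w')].

Definition corr_slice (H G : groupoid) (X : corr H G) (U : set (csp X)) :=
  is_slice (cs X) (ract X) U.

Section Composition.
Variables (K H G : groupoid) (X : corr K H) (Y : corr H G).

Definition fib : set (csp X * csp Y) := [set p | cs X p.1 = cr Y p.2].
Definition fibT : topologicalType := set_type fib.

Definition fib_rel (p q : fibT) : Prop :=
  exists h : gmor H, gsg h = cs X (val p).1 /\
    val q = (ract X (val p).1 (ginv h), lact Y h (val p).2).

Definition horbit (p : fibT) : set fibT := fib_rel p.

Definition horbits : set (set fibT) := [set A | exists p, A = horbit p].

Definition comp_space : Type := set_type horbits.

HB.instance Definition _ := Choice.on comp_space.


Definition comp_pi (p : fibT) : comp_space :=
  SigSub (mem_set (ex_intro (fun q => horbit p = horbit q) p erefl)).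

Definition comp_open (W : set comp_space) : Prop := open (comp_pi @^-1` W).

Program Definition comp_topology_mixin :=
  @isOpenTopological.Build comp_space comp_open _ _ _.
Next Obligation. by rewrite /comp_open preimage_setT; exact: openT. Qed.
Next Obligation. by move=> ? ? ? ?; exact: openI. Qed.
Next Obligation. by move=> I f ofi; apply: bigcup_open => i _; exact: ofi. Qed.
HB.instance Definition _ := comp_topology_mixin.

Definition comp_rep (z : comp_space) : fibT :=
  projT1 (cid (set_mem (valP z))).

Definition comp_s (z : comp_space) : gob G := cs Y (val (comp_rep z)).2.

Lemma ract_fib (p : fibT) (g : gmor G) :
  cs Y (val p).2 = grg g ->
  fib ((val p).1, ract Y (val p).2 g).
Proof.
move=> e; rewrite /fib /= cr_ract //; exact: (set_mem (valP p)).
Qed.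

Definition comp_ract (z : comp_space) (g : gmor G) : comp_space :=
  match pselect (cs Y (val (comp_rep z)).2 = grg g) with
  | left e => comp_pi (SigSub (mem_set (ract_fib e)))
  | right _ => z
  end.

Definition slice_prod (U : set (csp X)) (V : set (csp Y)) : set comp_space :=
  [set z | exists p : fibT, [/\ U (val p).1, V (val p).2 & z = comp_pi p]].

End Composition.

(* Main.v *)
Require Import Defs.
From HB Require Import structures.
From mathcomp Require Import all_boot all_algebra all_classical topology.
Local Open Scope classical_set_scope.
Set Implicit Arguments.

Section GAlg.
Variable H : groupoid.
Implicit Types g h k : gmor H.

Lemma ginv_uniq g a : gsg g = grg a -> gmul g a = gunit (grg g) -> a = ginv g.
Proof.
move=> e m.
have e1 : gsg (ginv g) = grg g by rewrite gsg_inv.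
rewrite -[a]gmul1g -e -gmulVg gmulA ?grg_inv // m -e1 gmulg1 //.
Qed.

Lemma ginvK g : ginv (ginv g) = g.
Proof.
symmetry; apply: ginv_uniq; first by rewrite gsg_inv.
by rewrite gmulVg grg_inv.
Qed.

Lemma ginvM k h : gsg k = grg h -> ginv (gmul k h) = gmul (ginv h) (ginv k).
Proof.
move=> e; symmetry; apply: ginv_uniq.
  by rewrite gsg_mul // grg_mul ?grg_inv // gsg_inv.
rewrite grg_mul //.
rewrite gmulA ?gsg_mul ?grg_mul ?grg_inv ?gsg_inv //.
rewrite -[gmul h (gmul (ginv h) (ginv k))]gmulA ?grg_inv ?gsg_inv //.
rewrite gmulgV.
rewrite -e -(grg_inv k) gmul1g gmulgV //.
Qed.

Lemma ginv_unit (a : gob H) : ginv (gunit a) = gunit a.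
Proof.
symmetry; apply: ginv_uniq; first by rewrite gsg_unit grg_unit.
by rewrite -[in X in gmul _ X](gsg_unit a) gmulg1 grg_unit.
Qed.

Lemma free_unit k (a : gob H) : gsg k = a -> ginv k = gunit a -> k = gunit a.
Proof. by move=> e E; rewrite -[k]ginvK E ginv_unit. Qed.
End GAlg.

Section Rel.
Variables (K H G : groupoid) (X : corr K H) (Y : corr H G).
Implicit Types p q r : fibT X Y.

Lemma fibP (p : fibT X Y) : cs X (val p).1 = cr Y (val p).2.
Proof. exact: (set_mem (valP p)). Qed.

Lemma fib_refl p : fib_rel p p.
Proof.
exists (gunit (cs X (val p).1)); split; first by rewrite gsg_unit.
rewrite ginv_unit ract1 fibP lact1; exact: surjective_pairing.
Qed.

Lemma fib_sym p q : fib_rel p q -> fib_rel q p.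
Proof.
case=> h [e E]; exists (ginv h); rewrite E /=; split.
  by rewrite gsg_inv cs_ract ?grg_inv ?gsg_inv ?e.
rewrite ginvK -ractA ?grg_inv ?gsg_inv // gmulVg e ract1.
rewrite -lactA ?grg_inv ?gsg_inv -?fibP // gmulVg e fibP lact1.
exact: surjective_pairing.
Qed.

Lemma fib_trans p q r : fib_rel p q -> fib_rel q r -> fib_rel p r.
Proof.
case=> h [e Eq] [k [e' E']]; rewrite Eq /= in e' E' *.
have ek : gsg k = grg h by rewrite e' cs_ract ?gsg_inv // grg_inv e.
exists (gmul k h); split; first by rewrite gsg_mul.
have -> : \val r = sval r by []. rewrite E'.
rewrite ginvM // -ractA ?grg_inv ?gsg_inv //.
rewrite lactA //; last by rewrite e fibP.
Qed.

Lemma horbit_eq p q : fib_rel p q -> horbit p = horbit q.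
Proof.
move=> pq; apply/seteqP; split => r /=.
  by move=> pr; apply: fib_trans (fib_sym pq) pr.
by move=> qr; apply: fib_trans pq qr.
Qed.

Lemma pi_eqP p q : comp_pi p = comp_pi q <-> fib_rel p q.
Proof.
split.
  move=> /(congr1 val) /= E.
  have : horbit q q by exact: fib_refl.
  by rewrite -E.
by move=> pq; apply: val_inj => /=; exact: horbit_eq.
Qed.

Lemma rep_val (z : comp_space X Y) : horbit (comp_rep z) = val z.
Proof.
rewrite /comp_rep; case: (cid _) => p /= E; by rewrite E.
Qed.

Lemma rep_pi p : fib_rel p (comp_rep (comp_pi p)).
Proof.
have : horbit (comp_rep (comp_pi p)) (comp_rep (comp_pi p)) by exact: fib_refl.
by rewrite rep_val.
Qed.

End Rel.

Lemma local_section (S T : topologicalType) (f : S -> T) (B : set S) (b0 : S) :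
  open B -> (forall a b, B a -> B b -> f a = f b -> a = b) ->
  (forall W, open W -> W `<=` B -> open (f @` W)) ->
  exists sg : T -> S,
    [/\ forall b, B b -> sg (f b) = b,
        forall t, (f @` B) t -> B (sg t) /\ f (sg t) = t &
        forall b, B b -> {for f b, continuous sg}].
Proof.
move=> oB inj opn.
pose sg t := match pselect (exists b, B b /\ f b = t) with
  | left e => sval (cid e) | right _ => b0 end.
have sgP t : (f @` B) t -> B (sg t) /\ f (sg t) = t.
  case=> b Bb <-; rewrite /sg; case: pselect => [e|]; last first.
    by move=> nE; exfalso; apply: nE; exists b.
  by case: (cid e).
have sgK b : B b -> sg (f b) = b.
  move=> Bb; have [B1 E1] := sgP (f b) (ex_intro2 _ _ b Bb erefl).
  exact: inj.
exists sg; split => // b Bb.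
move=> N /=; rewrite sgK //.
rewrite nbhsE => -[O [oO Ob] ON]; change (nbhs (f b) (sg @^-1` N)).
have oOB : open (O `&` B) by exact: openI.
have : nbhs (f b) (f @` (O `&` B)).
  by apply: open_nbhs_nbhs; split; [exact: opn | exists b].
apply: filterS => _ [c [Oc Bc] <-].
by rewrite /= sgK //; exact: ON.
Qed.

Lemma within_at (S T : topologicalType) (A : set S) (f : S -> T) a N :
  {within A, continuous f} -> A a -> nbhs (f a) N ->
  nbhs a (fun b => A b -> N (f b)).
Proof.
move=> cf Aa Nf; have := cf a N Nf.
rewrite /= /nbhs /= -nbhs_subspace_in //.
Qed.

Lemma pair_at (T S1 S2 : topologicalType) (f1 : T -> S1) (f2 : T -> S2) x P :
  {for x, continuous f1} -> {for x, continuous f2} ->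
  nbhs (f1 x, f2 x) P -> nbhs x (fun y => P (f1 y, f2 y)).
Proof. move=> c1 c2; exact: (cvg_pair c1 c2). Qed.

Section Open.
Variables (K H G : groupoid) (X : corr K H) (Y : corr H G).
Variables (U : set (csp X)) (V : set (csp Y)).
Hypotheses (oU : open U) (oV : open V).

Lemma val_cont (p : fibT X Y) : {for p, continuous (fun q : fibT X Y => val q)}.
Proof. exact: initial_continuous. Qed.

Lemma fst_cont (p : fibT X Y) : {for p, continuous (fun q : fibT X Y => (val q).1)}.
Proof.
apply: (@continuous_comp _ _ _ (fun q : fibT X Y => val q) fst); first exact: val_cont.
exact: cvg_fst.
Qed.

Lemma snd_cont (p : fibT X Y) : {for p, continuous (fun q : fibT X Y => (val q).2)}.
Proof.
apply: (@continuous_comp _ _ _ (fun q : fibT X Y => val q) snd); first exact: val_cont.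
exact: cvg_snd.
Qed.


Lemma open_pre : open (comp_pi (X:=X) (Y:=Y) @^-1` slice_prod U V).
Proof.
rewrite openE => p0 [q0 [Uq Vq E]].
have : fib_rel q0 p0 by apply/fib_sym/pi_eqP.
case=> h [eh Ep0].
pose k0 := ginv h.
case: (gsg_etale H) => _ /(_ k0) [B [oB Bk0 injB opnB]].
have [sg [sgK sgP sgC]] := @local_section _ _ _ B k0 oB injB opnB.
pose t (p : fibT X Y) := cr Y (val p).2.
pose k p := sg (t p).
have tp0 : t p0 = gsg k0.
  by rewrite /t Ep0 /= cr_lact ?gsg_inv // eh fibP.
have kp0 : k p0 = k0 by rewrite /k tp0 sgK.
have t_cont : {for p0, continuous t}.
  apply: (@continuous_comp _ _ _ (fun q : fibT X Y => (val q).2) (cr Y)); [exact: snd_cont | exact: cr_cont].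
have k_cont : {for p0, continuous k}.
  apply: (continuous_comp t_cont); rewrite tp0; exact: sgC.
have NB : nbhs p0 (fun p => (@gsg H @` B) (t p)).
  apply: t_cont; apply: open_nbhs_nbhs; split; first exact: opnB.
  by rewrite tp0; exists k0.
have dom p : (@gsg H @` B) (t p) -> B (k p) /\ gsg (k p) = t p.
  exact: sgP.
have NU : nbhs p0 (fun p => U (ract X (val p).1 (ginv (k p)))).
  have Apt : cs X (val p0).1 = grg (ginv k0) by rewrite grg_inv -tp0 /t fibP.
  have Upt : U (ract X (val p0).1 (ginv k0)).
    rewrite Ep0 /= /k0 ginvK -ractA ?grg_inv ?gsg_inv // gmulVg eh ract1 //.
  rewrite -kp0 in Apt Upt.
  have W := @within_at _ _ _ _ ((val p0).1, ginv (k p0)) U (@ract_cont _ _ X) Apt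
     (open_nbhs_nbhs (conj oU Upt)).
  have := @pair_at _ _ _ (fun p : fibT X Y => (val p).1) (fun p => ginv (k p)) p0 _
    (fst_cont p0) (continuous_comp k_cont (@ginv_cont H _)) W.
  apply: filterS2 NB => p Bp Wp; apply: Wp => /=.
  have [Bk ek] := dom p Bp.
  by rewrite grg_inv ek /t fibP.
have NV : nbhs p0 (fun p => V (lact Y (k p) (val p).2)).
  have Apt : gsg (k p0) = cr Y (val p0).2 by rewrite kp0 -tp0.
  have Vpt : V (lact Y (k p0) (val p0).2).
    rewrite kp0 Ep0 /= /k0 -lactA ?grg_inv ?gsg_inv ?eh ?fibP //.
    by rewrite gmulVg eh fibP lact1.
  have W := @within_at _ _ _ _ (k p0, (val p0).2) V (@lact_cont _ _ Y) Apt
     (open_nbhs_nbhs (conj oV Vpt)).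
  have := @pair_at _ _ _ k (fun p : fibT X Y => (val p).2) p0 _
    k_cont (snd_cont p0) W.
  apply: filterS2 NB => p Bp Wp; apply: Wp => /=.
  by have [Bk ek] := dom p Bp.
rewrite /interior /=.
have All := @filterS2 _ _ (@nbhs_filter (fibT X Y) p0) _ _ _ (fun p a b => conj a b) NU
  (@filterS2 _ _ (@nbhs_filter (fibT X Y) p0) _ _ _ (fun p a b => conj a b) NV NB).
move: All; apply: (@filterS _ _ (@nbhs_filter (fibT X Y) p0)) => p [Up [Vp Bp]].
have [Bk ek] := dom p Bp.
have fq : fib (X:=X) (Y:=Y) (ract X (val p).1 (ginv (k p)), lact Y (k p) (val p).2).
  rewrite /fib /= cs_ract ?grg_inv ?ek /t ?fibP // cr_lact ?gsg_inv //.
exists (SigSub (mem_set fq)); split => //.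
apply/pi_eqP; exists (k p); split => //.
by rewrite ek /t fibP.
Qed.

Lemma slice_open : open (slice_prod U V).
Proof. exact: open_pre. Qed.
End Open.

Section Rest.
Variables (K H G : groupoid) (X : corr K H) (Y : corr H G).
Variables (U : set (csp X)) (V : set (csp Y)).
Implicit Types p q r : fibT X Y.

Lemma fibT_eq p q : (val p).1 = (val q).1 -> (val p).2 = (val q).2 -> p = q.
Proof.
move=> e1 e2; apply: val_inj.
by rewrite [LHS]surjective_pairing [RHS]surjective_pairing e1 e2.
Qed.

Lemma cs_pi p : comp_s (comp_pi p) = cs Y (val p).2.
Proof.
rewrite /comp_s; have [h [e ->]] := rep_pi p => /=.
by rewrite cs_lact // e fibP.
Qed.

Lemma rel_U p q : corr_slice U -> U (val p).1 -> U (val q).1 -> fib_rel p q ->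
  (val p).1 = (val q).1 /\ (val p).2 = (val q).2.
Proof.
case=> _ _ orbU Up Uq [h [e E]].
have e1 : (val p).1 = (val q).1.
  apply: orbU => //; exists (ginv h); split; first by rewrite grg_inv e.
  by rewrite E.
split => //.
have hu : h = gunit (cs X (val p).1).
  apply: free_unit => //; apply: ract_free; first by rewrite grg_inv e.
  by have /= <- := congr1 fst E; rewrite -e1.
by rewrite E /= hu fibP lact1.
Qed.

End Rest.


Unset Implicit Arguments.
Theorem lemma7p11 (K H G : groupoid) (X : corr K H) (Y : corr H G)
    (U : set (csp X)) (V : set (csp Y)) :
  corr_slice U -> corr_slice V ->
  is_slice (@comp_s K H G X Y) (@comp_ract K H G X Y) (slice_prod U V) /\
  (forall z, slice_prod U V z ->
     forall p q : fibT X Y,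
       U (val p).1 -> V (val p).2 -> U (val q).1 -> V (val q).2 ->
       z = comp_pi p -> z = comp_pi q ->
       (val p).1 = (val q).1 /\ (val p).2 = (val q).2).
Proof.
move=> sU sV; have sU' := sU; case: sU => oU injU orbU; case: sV => oV injV orbV.
split; last first.
  move=> z _ p q Up Vp Uq Vq -> /pi_eqP pq; exact: rel_U sU' Up Uq pq.
split.
- exact: (@slice_open _ _ _ X Y U V oU oV).
- move=> w w' [p [Up Vp ->]] [p' [Up' Vp' ->]]; rewrite !cs_pi => e.
  have e2 := injV _ _ Vp Vp' e.
  have e1 : (val p).1 = (val p').1 by apply: injU => //; rewrite !fibP e2.
  by rewrite (@fibT_eq _ _ _ X Y p p' e1 e2).
- move=> w w' [p [Up Vp ->]] [p' [Up' Vp' ->]] [g [e E]].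
  move: E; rewrite /comp_ract; case: pselect => [e'|_]; last by move=> ->.
  move=> E.
  have [h [eh Er]] := rep_pi p.
  rewrite cs_pi in e.
  have fr : fib (X:=X) (Y:=Y) ((val p).1, ract Y (val p).2 g).
    by rewrite /fib /= cr_ract // fibP.
  have R1 : fib_rel (SigSub (mem_set fr)) (SigSub (mem_set (ract_fib e'))).
    exists h; split => //=.
    have Er' : sval (comp_rep (comp_pi p)) =
      (ract X (val p).1 (ginv h), lact Y h (val p).2) := Er.
    rewrite Er' /= lract_comm //; by rewrite eh fibP.
  have R2 := fib_sym (proj1 (pi_eqP _ _) E).
  have [a1 a2] := @rel_U _ _ _ X Y U (SigSub (mem_set fr)) p' sU' Up Up' (fib_trans R1 R2).
  have e2 : (val p).2 = (val p').2.
    by apply: orbV => //; exists g; split.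
  by rewrite (@fibT_eq _ _ _ X Y p p' a1 e2).
Qed.
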